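(* Let $Q=[(n,q),(\hat n,\hat q)]$ be a pointed irregular type with $q,\hat q$ compatible, and let $k=f_{q,\hat q}$. A list $Q'$ of pairs satisfies $Q'\sim Q$ if and only if $Q'=[(n,q'),(\hat n,\hat q')]$ where $q',\hat q'$ are compatible exponential factors in distinct Galois orbits such that (1) $\mathrm{Levels}(q')=\mathrm{Levels}(q)$ and $\mathrm{Levels}(\hat q')=\mathrm{Levels}(\hat q)$; (2) the common parts satisfy $\mathrm{Levels}(q'_c)=\mathrm{Levels}(q_c)$; (3) $f_{q',\hat q'}=k$. Moreover, (1)–(3) hold if and only if $\mathrm{Levels}(q')=\mathrm{Levels}(q)$, $\mathrm{Levels}(\hat q')=\mathrm{Levels}(\hat q)$ and $f_{q',\hat q'}=k$.
   Context: Exponential factors: finite sums $q=\sum_ka_kx^k$, $a_k\in\mathbb C$, $k\in\mathbb Q_{>0}$; $E(q)$ = set of exponents with $a_k\ne0$; $\mathrm{slope}(q)=\max E(q)$ ($0$ if $q=0$); $\mathrm{ram}(q)$ = least $r\ge1$ with $q\in x^{1/r}\mathbb C[x^{1/r}]$. Galois operator $\sigma(\sum a_kx^k)=\sum a_ke^{-2\pi\sqrt{-1}k}x^k$; Stokes circle $\langle q\rangle=\{\sigma^i(q)\}$. Truncation $\tau_k(\sum a_{k'}x^{k'})=\sum_{k'\ge k}a_{k'}x^{k'}$. $\mathrm{Levels}(q)=\{\mathrm{slope}(q-\sigma^i(q)):i\in\mathbb Z\}\setminus\{0\}$. Common part/fission exponent: for $q,\hat q$ in distinct orbits, if some $k\in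 E(q)$ has $\langle\tau_k(q)\rangle=\langle\tau_k(\hat q)\rangle$, let $k$ be the smallest, $q_c=\tau_k(q)$, $\hat q_c=\tau_k(\hat q)$; else $q_c=\hat q_c=0$. $f_{q,\hat q}=\max(\mathrm{slope}(q-q_c),\mathrm{slope}(\hat q-\hat q_c))$. Compatible means $q_c=\hat q_c$. A pointed irregular type is $[(n_1,q_1),\dots,(n_m,q_m)]$, $n_i\in\mathbb N_{>0}$, $q_i$ in pairwise distinct Galois orbits. For a list $Q'=[(n'_1,q'_1),\dots,(n'_p,q'_p)]$ ($n'_i\in\mathbb N_{>0}$, $q'_i$ exponential factors), $Q'\sim Q$ means $p=m$, $n'_i=n_i$, and $\mathrm{slope}(\sigma^k(q'_i)-\sigma^l(q'_j))=\mathrm{slope}(\sigma^k(q_i)-\sigma^l(q_j))$ for all $1\le i,j\le m$, $0\le k\le\mathrm{ram}(q_i)$, $0\le l\le\mathrm{ram}(q_j)$. *)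

(* Defs.v *)
From HB Require Import structures.
From mathcomp Require Import all_boot all_order all_algebra.
From mathcomp Require Import all_classical all_reals.
From mathcomp Require Import trigo.
From mathcomp Require Import complex.
Set Implicit Arguments. Unset Strict Implicit. Unset Printing Implicit Defensive.
Import Order.TTheory GRing.Theory Num.Theory.
Local Open Scope ring_scope.
Local Open Scope classical_set_scope.

Section ExpFactors.
Variable R : realType.
Local Notation C := (complex R).

(* An exponential factor sum_k a_k x^k is encoded by its coefficient function
   k |-> a_k (k : rat); see [is_ef] for the finiteness/positivity condition. *)
Definition ef := rat -> C.

Definition is_ef (q : ef) : Prop :=
  exists s : seq rat, forall k, q k != 0 -> (k \in s) && (0 < k).

Definition ef0 : ef := fun _ => 0.
Definition ef_sub (q p : ef) : ef := fun k => q k - p k.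

Definition Eset (q : ef) : set rat := [set k | q k != 0].

Definition is_slope (q : ef) (s : rat) : Prop :=
  (q = ef0 /\ s = 0) \/ (q s != 0 /\ forall k, q k != 0 -> k <= s).
Definition slope (q : ef) : rat := xget 0 [set s | is_slope q s].

Definition zeta (t : rat) : C :=
  Complex (cos (2 * pi * ratr t)) (- sin (2 * pi * ratr t)).

Definition sigma (q : ef) : ef := fun k => q k * zeta k.
Definition sigmaz (i : int) (q : ef) : ef := fun k => q k * (zeta k) ^ i.

Definition stokes (q : ef) : set ef := [set p | exists i : int, p = sigmaz i q].

Definition trunc (k : rat) (q : ef) : ef := fun k' => if k <= k' then q k' else 0.

Definition in_ram (q : ef) (r : nat) : Prop :=
  (0 < r)%N /\ forall k, q k != 0 -> exists m : nat, k = (m%:R / r%:R)%R.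
Definition ram (q : ef) : nat :=
  xget 1%N [set r | in_ram q r /\ forall r', in_ram q r' -> (r <= r')%N].

Definition Levels (q : ef) : set rat :=
  [set s | s != 0 /\ exists i : int, s = slope (ef_sub q (sigmaz i q))].

Definition is_common_exp (q qh : ef) (k : rat) : Prop :=
  [/\ q k != 0, stokes (trunc k q) = stokes (trunc k qh) &
      forall k', q k' != 0 -> stokes (trunc k' q) = stokes (trunc k' qh) -> k <= k'].
Definition common_exp (q qh : ef) : option rat :=
  xget None [set o | exists k, o = Some k /\ is_common_exp q qh k].

Definition commonL (q qh : ef) : ef :=
  if common_exp q qh is Some k then trunc k q else ef0.
Definition commonR (q qh : ef) : ef :=
  if common_exp q qh is Some k then trunc k qh else ef0.

Definition fission (q qh : ef) : rat :=
  Num.max (slope (ef_sub q (commonL q qh))) (slope (ef_sub qh (commonR q qh))).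

Definition compatible (q qh : ef) : Prop := commonL q qh = commonR q qh.

Definition distinct_orbits (q qh : ef) : Prop := stokes q <> stokes qh.

Definition ef_list (Q : seq (nat * ef)) : Prop :=
  forall i, (i < size Q)%N -> (0 < (nth (0%N, ef0) Q i).1)%N /\ is_ef (nth (0%N, ef0) Q i).2.

Definition pointed_irr_type (Q : seq (nat * ef)) : Prop :=
  ef_list Q /\ forall i j, (i < size Q)%N -> (j < size Q)%N -> i != j ->
    distinct_orbits (nth (0%N, ef0) Q i).2 (nth (0%N, ef0) Q j).2.

Definition sim (Q' Q : seq (nat * ef)) : Prop :=
  let q_ i := (nth (0%N, ef0) Q i).2 in
  let q'_ i := (nth (0%N, ef0) Q' i).2 in
  [/\ size Q' = size Q,
      forall i, (i < size Q)%N -> (nth (0%N, ef0) Q' i).1 = (nth (0%N, ef0) Q i).1 &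
      forall i j, (i < size Q)%N -> (j < size Q)%N ->
        forall k l : nat, (k <= ram (q_ i))%N -> (l <= ram (q_ j))%N ->
          slope (ef_sub (sigmaz k (q'_ i)) (sigmaz l (q'_ j)))
          = slope (ef_sub (sigmaz k (q_ i)) (sigmaz l (q_ j)))].

End ExpFactors.

(* Main.v *)
Require Import Defs.
From HB Require Import structures.
From mathcomp Require Import all_boot all_order all_algebra.
From mathcomp Require Import all_classical all_reals.
From mathcomp Require Import trigo.
From mathcomp Require Import complex.
From mathcomp Require Import ring lra.
Import Order.TTheory GRing.Theory Num.Theory.
Set Implicit Arguments. Unset Strict Implicit. Unset Printing Implicit Defensive.
Local Open Scope ring_scope.
Local Open Scope classical_set_scope.

Section Aux.
Variable R : realType.
Local Notation C := (complex R).

Lemma zeta_neq0 t : zeta R t != 0.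
Proof.
rewrite /zeta; apply/eqP => H.
have := congr1 (@complex.Re R) H.
have := congr1 (@complex.Im R) H.
rewrite [complex.Re (_ -i* _)%C]/= [complex.Im (_ -i* _)%C]/= [complex.Re 0]/= [complex.Im 0]/= => hs hc.
have := @cos2Dsin2 R (2 * pi * ratr t).
rewrite hc; move/eqP: hs; rewrite oppr_eq0 => /eqP ->.
by rewrite expr0n /= add0r => /eqP; rewrite eq_sym oner_eq0.
Qed.

Lemma zetaD a b : zeta R (a + b) = zeta R a * zeta R b.
Proof.
rewrite /zeta rmorphD mulrDr cosD sinD /=.
congr Complex; ring.
Qed.

Lemma zeta_nat (m : nat) : zeta R m%:R = 1.
Proof.
elim: m => [|m IH].
  by rewrite /zeta rmorph0 mulr0 cos0 sin0 oppr0.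
rewrite -addn1 natrD zetaD IH mul1r /zeta rmorph1 mulr1.
by rewrite mulr_natl cos2pi sin2pi oppr0.
Qed.

Lemma zetaX t (n : nat) : zeta R t ^+ n = zeta R (t *+ n).
Proof.
elim: n => [|n IH]; first by rewrite expr0 mulr0n -(zeta_nat 0).
by rewrite exprS IH mulrS zetaD.
Qed.

Lemma zeta_ram (m r : nat) : (0 < r)%N -> zeta R (m%:R / r%:R) ^ (r : int) = 1.
Proof.
move=> r0; rewrite -exprnP zetaX -[_ *+ r]mulr_natr divfK ?zeta_nat //.
by rewrite pnatr_eq0 -lt0n.
Qed.

Lemma max_ex (P : rat -> Prop) (s : seq rat) :
  (forall k, P k -> k \in s) ->
  (forall k, ~ P k) \/ exists m, P m /\ forall k, P k -> k <= m.
Proof.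
elim: s P => [|x s IH] P HP; first by left => k /HP.
have HP' : forall k, P k /\ k != x -> k \in s.
  move=> k [/HP]; rewrite inE => /orP[/eqP ->|//]; by rewrite eqxx.
case: (IH _ HP') => [none|[m [[Pm mx] Hm]]].
- case: (pselect (P x)) => Px.
  + right; exists x; split => // k Pk; case: (eqVneq k x) => [->//|kx].
    by case: (none k).
  + left => k Pk; case: (eqVneq k x) => [kx|kx]; first by subst.
    by apply: (none k).
- case: (pselect (P x)) => Px.
  + right; case: (leP m x) => mx'.
    * exists x; split => // k Pk; case: (eqVneq k x) => [->//|kx].
      exact: le_trans (Hm k (conj Pk kx)) mx'.
    * exists m; split => // k Pk; case: (eqVneq k x) => [->|kx]; first exact: ltW.
      exact: Hm.
  + right; exists m; split => // k Pk; apply: Hm; split => //.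
    by apply/eqP => kx; subst.
Qed.

Arguments max_ex {P s}.

Lemma min_ex (P : rat -> Prop) (s : seq rat) :
  (forall k, P k -> k \in s) ->
  (forall k, ~ P k) \/ exists m, P m /\ forall k, P k -> m <= k.
Proof.
move=> HP.
have HP' : forall k, P (- k) -> k \in map -%R s.
  move=> k /HP; rewrite -{2}(opprK k) => h. by rewrite mem_map //; apply: oppr_inj.
case: (@max_ex (fun k => P (- k)) _ HP') => [none|[m [Pm Hm]]].
- left => k Pk; apply: (none (- k)); by rewrite opprK.
- right; exists (- m); split => // k Pk; rewrite lerNl; apply: Hm; by rewrite opprK.
Qed.

Arguments min_ex {P s}.

Lemma ef_eq0P (p : ef R) : p = ef0 R <-> forall k, p k = 0.
Proof.
split => [-> //|h]; apply: funext => k; exact: h.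
Qed.

Lemma is_ef_ext (p p' : ef R) :
  (forall k, p' k != 0 -> p k != 0) -> is_ef p -> is_ef p'.
Proof. by move=> h [s hs]; exists s => k /h /hs. Qed.

Lemma is_ef_sub (p r : ef R) : is_ef p -> is_ef r -> is_ef (ef_sub p r).
Proof.
move=> [s hs] [s' hs']; exists (s ++ s') => k; rewrite /ef_sub mem_cat.
case: (eqVneq (p k) 0) => [pk|/hs /andP[-> ->] //].
case: (eqVneq (r k) 0) => [rk|/hs' /andP[-> ->]]; last by rewrite orbT.
by rewrite pk rk subrr eqxx.
Qed.

Lemma sigmaz_neq0 (i : int) (p : ef R) k : (sigmaz i p k != 0) = (p k != 0).
Proof.
by rewrite /sigmaz mulf_eq0 negb_or expfz_neq0 ?zeta_neq0 ?andbT.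
Qed.

Lemma is_ef_sigmaz i (p : ef R) : is_ef p -> is_ef (sigmaz i p).
Proof. by apply: is_ef_ext => k; rewrite sigmaz_neq0. Qed.

Lemma is_ef_trunc k (p : ef R) : is_ef p -> is_ef (trunc k p).
Proof. by apply: is_ef_ext => k'; rewrite /trunc; case: ifP => //; rewrite eqxx. Qed.

Lemma is_ef0 : is_ef (ef0 R).
Proof. by exists [::] => k; rewrite eqxx. Qed.

Lemma is_ef_pos (p : ef R) k : is_ef p -> p k != 0 -> 0 < k.
Proof. by move=> [s hs] /hs /andP[]. Qed.

Lemma slope_eq (p : ef R) s : is_slope p s -> slope p = s.
Proof.
move=> hs; apply: xget_unique => // s' hs'.
case: hs hs' => [[p0 ->]|[ps hps]] [[p0' ->]|[ps' hps']] //.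
- by move: ps'; rewrite p0 eqxx.
- by move: ps; rewrite p0' eqxx.
- by apply/le_anti; rewrite hps' // hps.
Qed.

Lemma slopeP (p : ef R) : is_ef p -> is_slope p (slope p).
Proof.
move=> [s hs]; apply: xgetPex.
have hs' : forall k, p k != 0 -> k \in s by move=> k /hs /andP[].
case: (max_ex hs') => [none|[m [pm hm]]].
- exists 0; left; split => //; apply/ef_eq0P => k.
  by case: (eqVneq (p k) 0) => // /none.
- by exists m; right.
Qed.

Lemma slope_ge (p : ef R) k : is_ef p -> p k != 0 -> k <= slope p.
Proof.
move=> hp pk; case: (slopeP hp) => [[p0 _]|[_ h]]; last exact: h.
by move: pk; rewrite p0 eqxx.
Qed.

Lemma slope_char (p : ef R) s :
  p s != 0 -> (forall k, p k != 0 -> k <= s) -> slope p = s.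
Proof. by move=> ps h; apply: slope_eq; right. Qed.

Lemma slope_ef0 : slope (ef0 R) = 0.
Proof. by apply: slope_eq; left. Qed.

Lemma slope_ge0 (p : ef R) : is_ef p -> 0 <= slope p.
Proof.
move=> hp; case: (slopeP hp) => [[_ ->]//|[ps _]].
exact: ltW (is_ef_pos hp ps).
Qed.

Lemma slope0 (p : ef R) : is_ef p -> slope p = 0 -> p = ef0 R.
Proof.
move=> hp; case: (slopeP hp) => [[-> _]//|[ps _] h].
by move: (is_ef_pos hp ps); rewrite h ltxx.
Qed.

Lemma slope_le (p : ef R) b : is_ef p -> 0 <= b ->
  (forall k, p k != 0 -> k <= b) -> slope p <= b.
Proof.
move=> hp b0 h; case: (slopeP hp) => [[_ ->]//|[ps _]]; exact: h.
Qed.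

Lemma slope_lt (p : ef R) b : is_ef p -> 0 < b ->
  (forall k, p k != 0 -> k < b) -> slope p < b.
Proof.
move=> hp b0 h; case: (slopeP hp) => [[_ ->]//|[ps _]]; exact: h.
Qed.

Lemma slope_ext (p p' : ef R) :
  (forall k, (p k != 0) = (p' k != 0)) -> slope p = slope p'.
Proof.
move=> h; rewrite /slope; congr xget; apply/seteqP; split => s; rewrite /is_slope /=.
- case=> [[/ef_eq0P p0 ->]|[ps hk]].
  + left; split => //; apply/ef_eq0P => k; apply/eqP; rewrite -[_ == _]negbK -h p0 eqxx //.
  + by right; split => [|k]; rewrite -h //; apply: hk.
- case=> [[/ef_eq0P p0 ->]|[ps hk]].
  + left; split => //; apply/ef_eq0P => k; apply/eqP; rewrite -[_ == _]negbK h p0 eqxx //.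
  + by right; split => [|k]; rewrite h //; apply: hk.
Qed.


Lemma sigmaz0 (p : ef R) : sigmaz 0 p = p.
Proof. by apply: funext => k; rewrite /sigmaz expr0z mulr1. Qed.

Lemma sigmazD (a b : int) (p : ef R) : sigmaz a (sigmaz b p) = sigmaz (a + b) p.
Proof.
apply: funext => k; rewrite /sigmaz -mulrA; congr (_ * _).
by rewrite addrC expfzDr ?zeta_neq0.
Qed.

Lemma stokes_sigmaz (i : int) (p : ef R) : stokes (sigmaz i p) = stokes p.
Proof.
apply/seteqP; split => x /= [j ->].
- by exists (j + i); rewrite sigmazD.
- by exists (j - i); rewrite sigmazD subrK.
Qed.

Lemma stokes_self (p : ef R) : stokes p p.
Proof. by exists 0; rewrite sigmaz0. Qed.

Definition cross (p r : ef R) (m : int) := slope (ef_sub p (sigmaz m r)).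

Lemma supp_scale (p p' : ef R) (u : rat -> C) :
  (forall k, u k != 0) -> (forall k, p' k = u k * p k) -> slope p' = slope p.
Proof.
move=> hu h; apply: slope_ext => k; by rewrite h mulf_eq0 negb_or hu.
Qed.

Lemma sim_slope (k l : int) (p r : ef R) :
  slope (ef_sub (sigmaz k p) (sigmaz l r)) = cross p r (l - k).
Proof.
apply: (@supp_scale _ _ (fun e => zeta R e ^ k)) => [e|e].
  by rewrite expfz_neq0 ?zeta_neq0.
rewrite /ef_sub /sigmaz mulrBr; congr (_ - _); first by rewrite mulrC.
by rewrite mulrCA -expfzDr ?zeta_neq0 // addrC subrK.
Qed.

Lemma cross_sym (p r : ef R) (m : int) : cross r p m = cross p r (- m).
Proof.
rewrite /cross; apply: (@supp_scale _ _ (fun e => - zeta R e ^ m)) => [e|e].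
  by rewrite oppr_eq0 expfz_neq0 ?zeta_neq0.
rewrite /ef_sub /sigmaz mulrBr !mulNr opprK mulrCA -expfzDr ?zeta_neq0 // subrr.
by rewrite expr0z mulr1 mulrC addrC.
Qed.

Lemma sigmaz_mod (N : int) (r : ef R) (m : int) :
  sigmaz N r = r -> sigmaz m r = sigmaz (m %% N)%Z r.
Proof.
move=> hN; apply: funext => k; rewrite /sigmaz.
case: (eqVneq (r k) 0) => [->|rk]; first by rewrite !mul0r.
have z1 : zeta R k ^ N = 1.
  have := congr1 (fun f => f k) hN; rewrite /sigmaz /= => h.
  by apply: (mulfI rk); rewrite h mulr1.
rewrite {1}(divz_eq m N) expfzDr ?zeta_neq0 // [((_ %/ _)%Z * N)%R]mulrC.
by rewrite -exprz_exp z1 exp1rz mul1r.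
Qed.

Lemma cross_mod (N : int) (p r : ef R) (m : int) :
  sigmaz N r = r -> cross p r m = cross p r (m %% N)%Z.
Proof. by move=> h; rewrite /cross (sigmaz_mod m h). Qed.

Lemma ram_ex0 (s : seq rat) : exists r : nat, (0 < r)%N /\
  forall k, k \in s -> 0 < k -> exists m : nat, k = m%:R / r%:R.
Proof.
elim: s => [|x s [r [r0 hr]]]; first by exists 1%N.
case: (ltP 0 x) => x0; last first.
  exists r; split => // k; rewrite inE => /orP[/eqP ->|ks]; last exact: hr.
  by rewrite ltNge x0.
set a := absz (numq x); set b := absz (denq x).
have ha : (a%:R : rat) = (numq x)%:~R.
  by rewrite /a natr_absz ger0_norm // ltW // numq_gt0.
have hb : (b%:R : rat) = (denq x)%:~R.
  by rewrite /b natr_absz ger0_norm // ltW // denq_gt0.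
have b0 : (0 < b)%N by rewrite /b absz_gt0 lt0r_neq0 // denq_gt0.
have rb0 : (r%:R : rat) != 0 by rewrite pnatr_eq0 -lt0n.
have bb0 : (b%:R : rat) != 0 by rewrite pnatr_eq0 -lt0n.
exists (r * b)%N; split; first by rewrite muln_gt0 r0.
move=> k; rewrite inE => /orP[/eqP ->|ks] k0.
- exists (a * r)%N; rewrite !natrM ha hb -[LHS]divq_num_den.
  have d0 : (denq x)%:~R != 0 :> rat by rewrite -hb.
  by field; rewrite rb0 d0.
- have [m ->] := hr k ks k0; exists (m * b)%N.
  by rewrite !natrM; field; rewrite rb0 bb0.
Qed.

Lemma ramP (p : ef R) : is_ef p -> in_ram p (ram p).
Proof.
move=> [s hs]; have [r0 [r00 hr0]] := ram_ex0 s.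
have h0 : in_ram p r0.
  split => // k /hs /andP[ks k0]; exact: hr0.
suff : [set r | in_ram p r /\ forall n', in_ram p n' -> (r <= n')%N] (ram p) by case.
apply: xgetPex.
have ex : exists r, `[< in_ram p r >] by exists r0; apply/asboolP.
case: (ex_minnP ex) => r /asboolP hr hmin.
exists r; split => // r' hr'; apply: hmin; exact/asboolP.
Qed.

Lemma ram_gt0 (p : ef R) : is_ef p -> (0 < ram p)%N.
Proof. by move=> /ramP []. Qed.

Lemma sigmaz_ram (p : ef R) : is_ef p -> sigmaz (ram p) p = p.
Proof.
move=> hp; have [r0 hr] := ramP hp; apply: funext => k; rewrite /sigmaz.
case: (eqVneq (p k) 0) => [->|/hr [m ->]]; first by rewrite mul0r.
by rewrite zeta_ram // mulr1.
Qed.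


Lemma diag_coef (p : ef R) (m : int) e :
  (ef_sub p (sigmaz m p) e != 0) = (p e != 0) && (zeta R e ^ m != 1).
Proof.
rewrite /ef_sub /sigmaz -{1}[p e]mulr1 -mulrBr mulf_eq0 negb_or subr_eq0.
by rewrite [1 == _]eq_sym.
Qed.

Lemma cross_nz (p r : ef R) (m : int) : is_ef p -> is_ef r ->
  cross p r m != 0 -> ef_sub p (sigmaz m r) (cross p r m) != 0.
Proof.
move=> hp hr; have hx := is_ef_sub hp (is_ef_sigmaz m hr).
rewrite /cross; case: (slopeP hx) => [[_ ->]|[]//]; by rewrite eqxx.
Qed.

Lemma levels_mem (p : ef R) L : is_ef p -> Levels p L -> p L != 0.
Proof.
move=> hp [L0 [i hi]]; have := @cross_nz p p i hp hp; rewrite /cross -hi => /(_ L0).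
by rewrite diag_coef => /andP[].
Qed.

Definition Gspec (S : set rat) (m : int) (s : rat) : Prop :=
  (s = 0 /\ forall L, S L -> zeta R L ^ m = 1) \/
  [/\ S s, zeta R s ^ m != 1 & forall L, S L -> zeta R L ^ m != 1 -> L <= s].

Lemma Gspec_uniq S m s s' : Gspec S m s -> Gspec S m s' -> s = s'.
Proof.
case=> [[-> h]|[Ss zs hs]] [[-> h']|[Ss' zs' hs']] //.
- by move: zs'; rewrite h // eqxx.
- by move: zs; rewrite h' // eqxx.
- by apply/le_anti; rewrite hs' // hs.
Qed.

Lemma Gspec_cross (p : ef R) m : is_ef p -> Gspec (Levels p) m (cross p p m).
Proof.
move=> hp; have hx := is_ef_sub hp (is_ef_sigmaz m hp).
rewrite /cross; case: (slopeP hx) => [[x0 ->]|[xs hs]].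
- left; split => // L hL; apply/eqP; apply: contraT => zL.
  have := levels_mem hp hL; have := diag_coef p m L.
  by rewrite x0 /ef0 eqxx zL andbT => <-.
- right; move: (xs); rewrite diag_coef => /andP[ps zs]; split => //.
  + split; last by exists m.
    by rewrite gt_eqF // (is_ef_pos hx xs).
  + move=> L hL zL; apply: hs; by rewrite diag_coef (levels_mem hp hL).
Qed.

Lemma levels_cross (p p' : ef R) m : is_ef p -> is_ef p' ->
  Levels p = Levels p' -> cross p p m = cross p' p' m.
Proof.
move=> hp hp' hL; apply: (@Gspec_uniq (Levels p) m); first exact: Gspec_cross.
by rewrite hL; apply: Gspec_cross.
Qed.

Lemma cross_levels (p p' : ef R) : (forall m, cross p p m = cross p' p' m) ->
  Levels p = Levels p'.
Proof.
move=> h; apply/seteqP; split => L /= [L0 [i hi]]; split => //; exists i.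
- by rewrite hi; apply: h.
- by rewrite hi; apply/esym/h.
Qed.

Lemma common_someP (q qh : ef R) k :
  common_exp q qh = Some k -> is_common_exp q qh k.
Proof.
rewrite /common_exp; case: xgetP => [x _ [k' [-> hk]]|_] //.
by case=> <-.
Qed.

Lemma common_noneP (q qh : ef R) : is_ef q -> common_exp q qh = None ->
  forall k, q k != 0 -> stokes (trunc k q) <> stokes (trunc k qh).
Proof.
move=> [s hs] hN k qk heq.
have hP : forall k, (q k != 0 /\ stokes (trunc k q) = stokes (trunc k qh)) -> k \in s.
  by move=> k' [/hs /andP[]].
case: (min_ex hP) => [none|[m [[qm hm] hmin]]]; first by apply: (none k).
have : [set o | exists k, o = Some k /\ is_common_exp q qh k] (common_exp q qh).
  apply: (@xgetI _ None _ (Some m)); exists m; split => //; split => // k' qk' he.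
  exact: hmin.
by rewrite hN => -[k' []].
Qed.

Lemma subtrunc (q : ef R) k e :
  ef_sub q (trunc k q) e = if k <= e then 0 else q e.
Proof. by rewrite /ef_sub /trunc; case: ifP => _; rewrite ?subrr ?subr0. Qed.

Lemma thresh (q qh : ef R) : is_ef q -> is_ef qh -> exists k, [/\ 0 < k,
  commonL q qh = trunc k q, commonR q qh = trunc k qh &
  forall e, q e != 0 -> stokes (trunc e q) = stokes (trunc e qh) -> k <= e].
Proof.
move=> hq hqh; rewrite /commonL /commonR.
case E: (common_exp q qh) => [k|].
- have [qk _ hmin] := common_someP E.
  by exists k; split => //; apply: is_ef_pos hq qk.
- set k := slope q + slope qh + 1.
  have sq := slope_ge0 hq; have sqh := slope_ge0 hqh.
  have k0 : 0 < k by rewrite /k ltr_wpDl // addr_ge0.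
  have hz : forall (p : ef R), is_ef p -> slope p <= slope q + slope qh ->
      ef0 R = trunc k p.
    move=> p hp hs; apply: funext => e; rewrite /trunc /ef0; case: ifP => // ke.
    apply/esym/eqP; apply: contraT => pe; have := slope_ge hp pe.
    move=> h; move: ke; rewrite /k; move=> ke.
    have : e <= slope q + slope qh by apply: le_trans h hs.
    by rewrite leNgt (lt_le_trans _ ke) // ltrDl.
  exists k; split => //.
  + by apply: hz => //; rewrite lerDl.
  + by apply: hz => //; rewrite lerDr.
  + by move=> e qe he; case: (common_noneP hq E qe he).
Qed.

Lemma fission_k (q qh : ef R) k : commonL q qh = trunc k q -> commonR q qh = trunc k qh ->
  fission q qh = Num.max (slope (ef_sub q (trunc k q))) (slope (ef_sub qh (trunc k qh))).
Proof. by rewrite /fission => -> ->. Qed.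


Lemma slope_nz (p : ef R) : is_ef p -> slope p != 0 -> p (slope p) != 0.
Proof. by move=> hp; case: (slopeP hp) => [[_ ->]|[]//]; rewrite eqxx. Qed.

Lemma fk_lt (q qh : ef R) k : is_ef q -> is_ef qh -> 0 < k ->
  Num.max (slope (ef_sub q (trunc k q))) (slope (ef_sub qh (trunc k qh))) < k.
Proof.
move=> hq hqh k0; rewrite gt_max; apply/andP; split; apply: slope_lt => //;
  try (apply: is_ef_sub => //; exact: is_ef_trunc);
  move=> e; rewrite subtrunc; case: ifP => ke; rewrite ?eqxx // => _;
  by rewrite ltNge ke.
Qed.

Lemma below_k (q qh : ef R) k e : is_ef q -> is_ef qh -> q e != 0 -> e < k ->
  e <= Num.max (slope (ef_sub q (trunc k q))) (slope (ef_sub qh (trunc k qh))).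
Proof.
move=> hq hqh qe ek; rewrite le_max; apply/orP; left.
apply: slope_ge; first by apply: is_ef_sub => //; exact: is_ef_trunc.
by rewrite subtrunc leNgt ek.
Qed.

Lemma levels_trunc (q qh : ef R) k : is_ef q -> is_ef qh -> 0 < k ->
  Levels (trunc k q) = [set L | Levels q L /\
    Num.max (slope (ef_sub q (trunc k q))) (slope (ef_sub qh (trunc k qh))) < L].
Proof.
move=> hq hqh k0.
set f := Num.max _ _.
have fk : f < k by apply: fk_lt.
have hc := is_ef_trunc k hq.
have xc : forall i e, (ef_sub (trunc k q) (sigmaz i (trunc k q)) e != 0) =
    (k <= e) && (ef_sub q (sigmaz i q) e != 0).
  by move=> i e; rewrite !diag_coef /trunc; case: ifP; rewrite ?eqxx.
apply/seteqP; split => L /=.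
- move=> hL; case: (hL) => L0 [i hi].
  have nz := @cross_nz _ _ i hc hc; rewrite /cross -hi in nz; have {nz} := nz L0.
  rewrite xc => /andP[kL xq].
  have hqi : cross q q i = L.
    apply: slope_char => // e xe; case: (leP k e) => ke.
    + rewrite hi; apply: slope_ge; first by apply: is_ef_sub => //; apply: is_ef_sigmaz.
      by rewrite xc ke.
    + exact: ltW (lt_le_trans ke kL).
  split; last exact: lt_le_trans fk kL.
  by split => //; exists i; rewrite -hqi.
- move=> [[L0 [i hi]] fL].
  have nz := @cross_nz _ _ i hq hq; rewrite /cross -hi in nz; have {nz} xq := nz L0.
  have pL : q L != 0 by move: xq; rewrite diag_coef => /andP[].
  have kL : k <= L.
    case: (leP k L) => // Lk; have := below_k hq hqh pL Lk.
    by rewrite -/f leNgt fL.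
  split => //; exists i; apply/esym; apply: slope_char; first by rewrite xc kL.
  move=> e; rewrite xc => /andP[_ xe]; rewrite hi; apply: slope_ge => //.
  by apply: is_ef_sub => //; apply: is_ef_sigmaz.
Qed.

Lemma cross_core (q qh : ef R) k m : is_ef q -> is_ef qh -> stokes q <> stokes qh ->
  0 < k -> trunc k q = trunc k qh ->
  (forall e, q e != 0 -> stokes (trunc e q) = stokes (trunc e qh) -> k <= e) ->
  cross q qh m = Num.max (cross (trunc k q) (trunc k q) m)
    (Num.max (slope (ef_sub q (trunc k q))) (slope (ef_sub qh (trunc k qh)))).
Proof.
move=> hq hqh hdist k0 htr hmin.
set c := trunc k q.
set s1 := slope (ef_sub q c); set s2 := slope (ef_sub qh (trunc k qh)).
set f := Num.max s1 s2.
have hc := is_ef_trunc k hq.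
have g1 : is_ef (ef_sub q c) by apply: is_ef_sub.
have g2 : is_ef (ef_sub qh (trunc k qh)) by apply: is_ef_sub => //; apply: is_ef_trunc.
have hy_ef : is_ef (ef_sub q (sigmaz m qh)) by apply: is_ef_sub => //; apply: is_ef_sigmaz.
have hqe : forall e, k <= e -> q e = qh e.
  by move=> e ke; have := congr1 (fun f => f e) htr; rewrite /trunc ke.
have fk : f < k by apply: fk_lt.
have bq : forall e, q e != 0 -> e < k -> e <= f by move=> e; apply: below_k.
have bqh : forall e, qh e != 0 -> e < k -> e <= f.
  move=> e qe ek; rewrite /f le_max; apply/orP; right.
  by apply: slope_ge => //; rewrite subtrunc leNgt ek.
have hy : forall e, k <= e -> ef_sub q (sigmaz m qh) e = ef_sub c (sigmaz m c) e.
  by move=> e ke; rewrite /ef_sub /sigmaz /c /trunc ke hqe.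
have hc0 : forall e, e < k -> ef_sub c (sigmaz m c) e = 0.
  by move=> e ek; rewrite /ef_sub /sigmaz /c /trunc leNgt ek /= mul0r subrr.
have hcx : is_ef (ef_sub c (sigmaz m c)) by apply: is_ef_sub => //; apply: is_ef_sigmaz.
have s10 := slope_ge0 g1; have s20 := slope_ge0 g2.
case: (eqVneq (cross c c m) 0) => hcc.
- rewrite hcc max_r; last by rewrite /f le_max s10.
  have xc0 := slope0 hcx hcc.
  have y0 : forall e, k <= e -> ef_sub q (sigmaz m qh) e = 0.
    by move=> e ke; rewrite hy // xc0.
  have f0 : 0 < f.
    rewrite lt_neqAle /f le_max s10 andbT; apply/negP => /eqP f0.
    have e1 : s1 = 0 by apply/le_anti; rewrite s10 f0 le_max lexx.
    have e2 : s2 = 0 by apply/le_anti; rewrite s20 f0 le_max lexx orbT.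
    have z1 := slope0 g1 e1; have z2 := slope0 g2 e2.
    apply: hdist; congr stokes; apply: funext => e.
    case: (leP k e) => ke; first exact: hqe.
    have := congr1 (fun f => f e) z1; have := congr1 (fun f => f e) z2.
    by rewrite /= !subtrunc leNgt ke /= /ef0 => -> ->.
  have yf : ef_sub q (sigmaz m qh) f != 0.
    apply/negP => /eqP yf0.
    have hqf : q f = qh f * zeta R f ^ m by apply/eqP; rewrite -subr_eq0; apply/eqP.
    have fnz : q f != 0 \/ qh f != 0.
      have [ef1|ef2] : f = s1 \/ f = s2.
        by rewrite /f; case: (leP s1 s2) => _; [right|left].
      + left; have := slope_nz g1; rewrite -/s1 -ef1 => /(_ (lt0r_neq0 f0)).
        by rewrite subtrunc leNgt fk.
      + right; have := slope_nz g2; rewrite -/s2 -ef2 => /(_ (lt0r_neq0 f0)).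
        by rewrite subtrunc leNgt fk.
    have qf : q f != 0.
      case: fnz => [//|qhf]; rewrite hqf; apply: mulf_neq0 => //; apply: expfz_neq0; exact: zeta_neq0.
    have hst : trunc f q = sigmaz m (trunc f qh).
      apply: funext => e; rewrite /trunc /sigmaz; case: ifP => fe; last by rewrite mul0r.
      case: (leP k e) => ke.
        by apply/eqP; rewrite -subr_eq0; apply/eqP; apply: y0.
      case: (eqVneq e f) => [->//|nef].
      have fe' : f < e by rewrite lt_neqAle eq_sym nef fe.
      have -> : q e = 0.
        by apply/eqP; apply: contraT => qe; have := bq e qe ke; rewrite leNgt fe'.
      have -> : qh e = 0.
        by apply/eqP; apply: contraT => qe; have := bqh e qe ke; rewrite leNgt fe'.
      by rewrite mul0r.
    have hs2 : stokes (trunc f q) = stokes (trunc f qh) by rewrite hst stokes_sigmaz.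
    have hh := hmin _ qf hs2.
    by move: hh; rewrite leNgt fk.

  apply: slope_char => // e ye; case: (leP k e) => ke.
    by move: ye; rewrite y0 // eqxx.
  move: ye; rewrite /ef_sub /sigmaz.
  case: (eqVneq (q e) 0) => [qe0|qe _]; last exact: bq.
  case: (eqVneq (qh e) 0) => [qhe0|qhe _]; last exact: bqh.
  by rewrite qe0 qhe0 mul0r subrr eqxx.
- have xL := cross_nz hc hc hcc.
  have kL : k <= cross c c m.
    case: (leP k (cross c c m)) => // Lk; by move: xL; rewrite hc0 // eqxx.
  rewrite max_l; last exact: ltW (lt_le_trans fk kL).
  rewrite {1}/cross; apply: (@slope_char (ef_sub q (sigmaz m qh)) (cross c c m)); first by rewrite hy.
  move=> e ye; case: (leP k e) => ke.
  + by rewrite /cross; apply: (@slope_ge (ef_sub c (sigmaz m c)) e hcx); rewrite -hy.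
  + exact: ltW (lt_le_trans ke kL).
Qed.


Lemma is_ef_commonL (q qh : ef R) : is_ef q -> is_ef qh -> is_ef (commonL q qh).
Proof. by move=> hq hqh; have [k [_ -> _ _]] := thresh hq hqh; apply: is_ef_trunc. Qed.

Lemma fission_ge0 (q qh : ef R) : is_ef q -> is_ef qh -> 0 <= fission q qh.
Proof.
move=> hq hqh; have [k [_ hL hR _]] := thresh hq hqh; rewrite (fission_k hL hR).
rewrite le_max slope_ge0 //; apply: is_ef_sub => //; exact: is_ef_trunc.
Qed.

Lemma compat_formula (q qh : ef R) : is_ef q -> is_ef qh -> distinct_orbits q qh ->
  compatible q qh -> forall m,
  cross q qh m = Num.max (cross (commonL q qh) (commonL q qh) m) (fission q qh).
Proof.
move=> hq hqh hd hc m; have [k [k0 hL hR hmin]] := thresh hq hqh.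
rewrite (fission_k hL hR) hL; apply: cross_core => //.
by rewrite -hL -hR.
Qed.

Lemma levels_common (q qh : ef R) : is_ef q -> is_ef qh ->
  Levels (commonL q qh) = [set L | Levels q L /\ fission q qh < L].
Proof.
move=> hq hqh; have [k [k0 hL hR _]] := thresh hq hqh.
by rewrite (fission_k hL hR) hL; apply: levels_trunc.
Qed.

Lemma cross_self0 (p : ef R) : cross p p 0 = 0.
Proof.
rewrite /cross sigmaz0 -slope_ef0; apply: slope_ext => k.
by rewrite /ef_sub /ef0 subrr.
Qed.

Lemma cross0_fission (q qh : ef R) : is_ef q -> is_ef qh -> distinct_orbits q qh ->
  compatible q qh -> cross q qh 0 = fission q qh.
Proof.
move=> hq hqh hd hc; rewrite compat_formula // cross_self0 max_r //.
exact: fission_ge0.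
Qed.

Lemma fission_le_cross (q qh : ef R) m : is_ef q -> is_ef qh -> distinct_orbits q qh ->
  compatible q qh -> fission q qh <= cross q qh m.
Proof. by move=> hq hqh hd hc; rewrite compat_formula // le_max lexx orbT. Qed.

Lemma period_of (p r : ef R) (N : int) : is_ef p -> is_ef r -> cross p r N = 0 ->
  p = sigmaz N r.
Proof.
move=> hp hr h0; have hx : is_ef (ef_sub p (sigmaz N r)).
  by apply: is_ef_sub => //; apply: is_ef_sigmaz.
have := slope0 hx h0 => /ef_eq0P hz; apply: funext => e.
by apply/eqP; rewrite -subr_eq0; apply/eqP; apply: hz.
Qed.

Lemma cross_ram (p : ef R) : is_ef p -> cross p p (ram p) = 0.
Proof.
move=> hp; rewrite /cross sigmaz_ram // -slope_ef0; apply: slope_ext => k.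
by rewrite /ef_sub /ef0 subrr.
Qed.

Lemma cross_red (p r : ef R) (N : nat) (m : int) : (0 < N)%N -> sigmaz N r = r ->
  cross p r m = cross p r (absz (m %% N)%Z).
Proof.
move=> N0 h; rewrite (@cross_mod N p r m h) gez0_abs // modz_ge0 //.
by move: N0; case: (N).
Qed.

Lemma absz_mod_lt (N : nat) (m : int) : (0 < N)%N -> (absz (m %% N)%Z < N)%N.
Proof.
move=> N0; rewrite -ltz_nat gez0_abs ?modz_ge0 ?ltz_pmod //.
by move: N0; case: (N).
Qed.

End Aux.

Unset Implicit Arguments.
Set Strict Implicit.

Theorem mainTheorem5 (R : realType) (n nh : nat) (q qh : ef R) :
  pointed_irr_type [:: (n, q); (nh, qh)] ->
  compatible q qh ->
  (forall Q' : seq (nat * ef R), ef_list Q' ->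
     (sim Q' [:: (n, q); (nh, qh)] <->
      exists q' qh' : ef R,
        [/\ Q' = [:: (n, q'); (nh, qh')],
            is_ef q' /\ is_ef qh', distinct_orbits q' qh', compatible q' qh' &
            [/\ Levels q' = Levels q /\ Levels qh' = Levels qh,
                Levels (commonL q' qh') = Levels (commonL q qh) &
                fission q' qh' = fission q qh]]))
  /\
  (forall q' qh' : ef R, is_ef q' -> is_ef qh' -> distinct_orbits q' qh' ->
     compatible q' qh' ->
     ([/\ Levels q' = Levels q /\ Levels qh' = Levels qh,
          Levels (commonL q' qh') = Levels (commonL q qh) &
          fission q' qh' = fission q qh]
      <->
      [/\ Levels q' = Levels q, Levels qh' = Levels qh &
          fission q' qh' = fission q qh])).
Proof.
move=> [hl hd] hc.
have hq : is_ef q by have [] := hl 0%N erefl.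
have hqh : is_ef qh by have [] := hl 1%N erefl.
have hdist : distinct_orbits q qh by apply: (hd 0%N 1%N).
have moreover : forall q' qh' : ef R, is_ef q' -> is_ef qh' ->
    Levels q' = Levels q -> fission q' qh' = fission q qh ->
    Levels (commonL q' qh') = Levels (commonL q qh).
  move=> q' qh' hq' hqh' hL hf.
  by rewrite (levels_common hq' hqh') (levels_common hq hqh) hL hf.
split; last first.
  move=> q' qh' hq' hqh' _ _; split.
  - by case=> [[-> ->] _ ->].
  - case=> e1 e2 e3; split => //; exact: moreover.
move=> Q' hQ'; split.
- case=> hsz hfst hsl.
  case: Q' hQ' hsz hfst hsl => [|[na q'] [|[nb qh'] [|]]] //= hQ' _ hfst hsl.
  have hq' : is_ef q' by have [] := hQ' 0%N erefl.
  have hqh' : is_ef qh' by have [] := hQ' 1%N erefl.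
  have e1 : na = n by apply: (hfst 0%N).
  have e2 : nb = nh by apply: (hfst 1%N).
  subst na nb.
  have hS : forall (i j : nat), (i < 2)%N -> (j < 2)%N ->
      forall l : nat, (l <= ram (nth (0%N, ef0 R) [:: (n, q); (nh, qh)] j).2)%N ->
      cross (nth (0%N, ef0 R) [:: (n, q'); (nh, qh')] i).2
            (nth (0%N, ef0 R) [:: (n, q'); (nh, qh')] j).2 l =
      cross (nth (0%N, ef0 R) [:: (n, q); (nh, qh)] i).2
            (nth (0%N, ef0 R) [:: (n, q); (nh, qh)] j).2 l.
    move=> i j hi hj l hlj; have := hsl i j hi hj 0%N l (leq0n _) hlj.
    by rewrite !sim_slope subr0.
  have h00 := hS 0%N 0%N erefl erefl; have h11 := hS 1%N 1%N erefl erefl.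
  have h01 := hS 0%N 1%N erefl erefl; rewrite /= in h00 h11 h01.
  have r1 := ram_gt0 hq; have r2 := ram_gt0 hqh.
  have per1 : sigmaz (ram q) q' = q'.
    apply/esym/period_of => //; rewrite h00 //; exact: cross_ram.
  have per2 : sigmaz (ram qh) qh' = qh'.
    apply/esym/period_of => //; rewrite h11 //; exact: cross_ram.
  have c01 : forall m, cross q' qh' m = cross q qh (absz (m %% ram qh)%Z).
    move=> m; rewrite (cross_red _ _ r2 per2) h01 //.
    exact: ltnW (absz_mod_lt _ r2).
  have c01' : forall m, cross q qh m = cross q qh (absz (m %% ram qh)%Z).
    by move=> m; rewrite (cross_red _ _ r2 (sigmaz_ram hqh)).
  have L1 : Levels q' = Levels q.
    apply: cross_levels => m.
    rewrite (cross_red _ _ r1 per1) (cross_red _ _ r1 (sigmaz_ram hq)) h00 //.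
    exact: ltnW (absz_mod_lt _ r1).
  have L2 : Levels qh' = Levels qh.
    apply: cross_levels => m.
    rewrite (cross_red _ _ r2 per2) (cross_red _ _ r2 (sigmaz_ram hqh)) h11 //.
    exact: ltnW (absz_mod_lt _ r2).
  have hd' : distinct_orbits q' qh'.
    move=> hst; have : stokes qh' q' by rewrite -hst; exact: stokes_self.
    case=> j hj; apply: hdist.
    have h0 : cross q' qh' j = 0.
      rewrite /cross -(@slope_ef0 R); apply: slope_ext => e.
      by rewrite /ef_sub /ef0 -hj subrr.
    rewrite c01 in h0.
    by rewrite (period_of hq hqh h0) stokes_sigmaz.
  have hc' : compatible q' qh'.
    rewrite /compatible /commonL /commonR.
    case E: (common_exp q' qh') => [k'|] //.
    case: (pselect (trunc k' q' = trunc k' qh')) => // hne; exfalso.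
    have [qk' heq _] := common_someP E.
    have k0 : 0 < k' by apply: is_ef_pos hq' qk'.
    have : stokes (trunc k' qh') (trunc k' q') by rewrite -heq; exact: stokes_self.
    case=> j hj.
    have hA : cross q' qh' j < k'.
      rewrite /cross; apply: (@slope_lt _ _ k') => //.
        by apply: is_ef_sub => //; apply: is_ef_sigmaz.
      move=> e; case: (leP k' e) => // ke; rewrite /ef_sub.
      have := congr1 (fun f => f e) hj; rewrite /trunc /sigmaz /= ke => ->.
      by rewrite subrr eqxx.
    have [e he] : exists e, trunc k' q' e != trunc k' qh' e.
      case: (pselect (exists e, trunc k' q' e != trunc k' qh' e)) => // none.
      case: hne; apply: funext => e.
      case: (eqVneq (trunc k' q' e) (trunc k' qh' e)) => // h.
      by case: none; exists e.
    have ke : k' <= e.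
      by case: (leP k' e) he => // ek; rewrite /trunc leNgt ek /= eqxx.
    have hB : k' <= cross q' qh' 0.
      apply: (le_trans ke); rewrite /cross.
      apply: (@slope_ge _ (ef_sub q' (sigmaz 0 qh')) e).
        by apply: is_ef_sub => //; apply: is_ef_sigmaz.
      by move: he; rewrite /trunc ke sigmaz0 /ef_sub subr_eq0.
    have := fission_le_cross (absz (j %% ram qh)%Z) hq hqh hdist hc.
    rewrite -c01 -(cross0_fission hq hqh hdist hc) -[cross q qh 0]h01 //.
    by move=> h; have := lt_le_trans (le_lt_trans h hA) hB; rewrite ltxx.
  have hf : fission q' qh' = fission q qh.
    by rewrite -(cross0_fission hq' hqh' hd' hc') -(cross0_fission hq hqh hdist hc) h01.
  exists q', qh'; split => //; split => //; exact: moreover.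
- case=> q' [qh' [-> [hq' hqh'] hd' hc' [[L1 L2] Lc hf]]].
  have X00 : forall d, cross q' q' d = cross q q d by move=> d; apply: levels_cross.
  have X11 : forall d, cross qh' qh' d = cross qh qh d by move=> d; apply: levels_cross.
  have X01 : forall d, cross q' qh' d = cross q qh d.
    move=> d; rewrite (compat_formula hq' hqh' hd' hc') (compat_formula hq hqh hdist hc) hf.
    rewrite (levels_cross _ (is_ef_commonL hq' hqh') (is_ef_commonL hq hqh) Lc) //.
  have X10 : forall d, cross qh' q' d = cross qh q d.
    by move=> d; rewrite cross_sym X01 -cross_sym.
  split => //.
    by case=> [|[|]].
  move=> [|[|i]] [|[|j]] //= _ _ k l _ _; rewrite !sim_slope //.
Qed.
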